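(* Let $\{\alpha_{i,j,k}\}_{1\le i,j,k\le d}$ be real numbers invariant under all permutations of the three indices, and suppose the system $\frac{\partial\varphi}{\partial t_i}=\sum_{j,k}\alpha_{i,j,k}t_j\frac{\partial\varphi}{\partial t_k}+t_i\varphi$ ($i=1,\dots,d$) has a $C^2$ solution $\varphi$ on a neighborhood of $\mathbf 0\in\mathbb R^d$ with $\varphi(\mathbf 0)\neq0$. Let $A_k:=(\alpha_{k,r,s})_{1\le r,s\le d}$, $C_{i,j}:=A_iA_j-A_jA_i$, and $F(\mathbf t):=\sum_{i,j,k}\alpha_{i,j,k}t_it_jt_k$. Then for all $i,j\in\{1,\dots,d\}$ and every $\xi\in\mathbb R^d$, the function $s\mapsto F(\mathbf t(s,\xi))$ is constant on $\mathbb R$, where $\mathbf t(s,\xi):=\exp(sC_{i,j})\xi$ is the solution of $\frac{d}{ds}\mathbf t(s,\xi)=C_{i,j}\mathbf t(s,\xi)$, $\mathbf t(0,\xi)=\xi$. *)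

(* Defs.v *)
From HB Require Import structures.
From mathcomp Require Import all_boot all_order all_algebra.
From mathcomp Require Import all_classical all_reals all_analysis.
Set Implicit Arguments. Unset Strict Implicit. Unset Printing Implicit Defensive.
Import Order.TTheory GRing.Theory Num.Theory.
Import numFieldNormedType.Exports.
Local Open Scope classical_set_scope.
Local Open Scope ring_scope.

Definition ebasis {R : realType} {d : nat} (i : 'I_d) : 'cV[R]_d := delta_mx i 0.

Definition partial {R : realType} {d : nat} (f : 'cV[R]_d -> R) (i : 'I_d)
  (x : 'cV[R]_d) : R := 'D_(ebasis i) f x.

Definition C2_on {R : realType} {d : nat} (U : set 'cV[R]_d) (f : 'cV[R]_d -> R) : Prop :=
  forall x, U x ->
    [/\ {for x, continuous f},
        (forall i, derivable f x (ebasis i)),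
        (forall i, {for x, continuous (partial f i)}),
        (forall i j, derivable (partial f i) x (ebasis j)) &
        (forall i j, {for x, continuous (partial (partial f i) j)})].

Definition Amat {R : realType} {d : nat} (alpha : 'I_d -> 'I_d -> 'I_d -> R)
  (k : 'I_d) : 'M[R]_d := \matrix_(r, s) alpha k r s.

Definition Cmat {R : realType} {d : nat} (alpha : 'I_d -> 'I_d -> 'I_d -> R)
  (i j : 'I_d) : 'M[R]_d := Amat alpha i *m Amat alpha j - Amat alpha j *m Amat alpha i.

Definition Fcubic {R : realType} {d : nat} (alpha : 'I_d -> 'I_d -> 'I_d -> R)
  (t : 'cV[R]_d) : R :=
  \sum_(i < d) \sum_(j < d) \sum_(k < d) alpha i j k * t i 0 * t j 0 * t k 0.

(* Main.v *)
Require Import Defs.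
From HB Require Import structures.
From mathcomp Require Import all_boot all_order all_algebra.
From mathcomp Require Import all_classical all_reals all_analysis.
Import Order.TTheory GRing.Theory Num.Theory.
Import numFieldNormedType.Exports.
Local Open Scope classical_set_scope.
Local Open Scope ring_scope.
From mathcomp Require Import ring lra.
Set Implicit Arguments. Unset Strict Implicit. Unset Printing Implicit Defensive.


Section S.
Variables (R : realType) (d : nat).
Local Notation V := 'cV[R]_d.

Lemma line_derive (f : V -> R) (y v : V) (s0 : R) :
  derivable f (y + s0 *: v) v ->
  is_derive s0 1 (fun s : R => f (y + s *: v)) ('D_v f (y + s0 *: v)).
Proof.
move=> df.
have E : (fun h : R => h^-1 *: (((fun s : R => f (y + s *: v)) \o shift s0) (h *: 1)
          - (fun s : R => f (y + s *: v)) s0)) =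
         (fun h : R => h^-1 *: ((f \o shift (y + s0 *: v)) (h *: v) - f (y + s0 *: v))).
  apply/funext => h /=; congr (_ *: (f _ - _)).
  by rewrite /shift /= scalerDl [h *: 1]mulr1 addrCA addrA.
apply: DeriveDef; first by rewrite /derivable E.
by rewrite /derive E.
Qed.
End S.

Section S2.
Variables (R : realType) (d : nat).
Local Notation V := 'cV[R]_d.

Lemma is_deriveM' (f g : R -> R) (x : R) (df dg : R) :
  is_derive x (1:R) f df -> is_derive x (1:R) g dg ->
  is_derive x (1:R) (fun s => f s * g s) (f x * dg + g x * df).
Proof. by move=> hf hg; have := is_deriveM hf hg. Qed.

Lemma is_deriveB' (f g : R -> R) (x : R) (df dg : R) :
  is_derive x (1:R) f df -> is_derive x (1:R) g dg ->
  is_derive x (1:R) (fun s => f s - g s) (df - dg).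
Proof. by move=> hf hg; have := is_deriveB hf hg. Qed.

Lemma is_deriveD' (f g : R -> R) (x : R) (df dg : R) :
  is_derive x (1:R) f df -> is_derive x (1:R) g dg ->
  is_derive x (1:R) (fun s => f s + g s) (df + dg).
Proof. by move=> hf hg; have := is_deriveD hf hg. Qed.

Lemma is_derive_sum' n (h : 'I_n -> R -> R) (x : R) (dh : 'I_n -> R) :
  (forall i, is_derive x (1:R) (h i) (dh i)) ->
  is_derive x (1:R) (fun s => \sum_(i < n) h i s) (\sum_(i < n) dh i).
Proof. by move=> H; have := is_derive_sum H; rewrite fct_sumE. Qed.

Lemma is_derive_uniq (f : R -> R) (x a b : R) :
  is_derive x (1:R) f a -> is_derive x (1:R) f b -> a = b.
Proof. by move=> [_ <-] [_ <-]. Qed.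

Lemma mvt_line2 (f1 f2 : V -> R) (y1 y2 v : V) (h : R) : 0 < h ->
 (forall s, 0 <= s <= h -> derivable f1 (y1 + s *: v) v /\ derivable f2 (y2 + s *: v) v) ->
 exists2 c, 0 < c < h & (f1 (y1 + h *: v) - f2 (y2 + h *: v)) - (f1 y1 - f2 y2)
    = ('D_v f1 (y1 + c *: v) - 'D_v f2 (y2 + c *: v)) * h.
Proof.
move=> h0 Hd.
pose u s := f1 (y1 + s *: v) - f2 (y2 + s *: v).
have du s : 0 <= s <= h -> is_derive s 1 u ('D_v f1 (y1 + s *: v) - 'D_v f2 (y2 + s *: v)).
  move=> /Hd [d1 d2]; apply: is_deriveB'; exact: line_derive.
have hsub s : s \in `]0, h[ -> 0 <= s <= h.
  by rewrite in_itv /= => /andP[a b]; rewrite !ltW.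
have cu : {within `[0, h], continuous u}.
  apply: continuous_in_subspaceT => s; rewrite inE /= in_itv /= => hs.
  have [dd _] := du s hs.
  exact/differentiable_continuous/derivable1_diffP.
have [c hc E] := @MVT R u (fun s => 'D_v f1 (y1 + s *: v) - 'D_v f2 (y2 + s *: v)) 0 h h0
  (fun s hs => du s (hsub s hs)) cu.
exists c; first by move: hc; rewrite in_itv.
by move: E; rewrite /u !scale0r !addr0 subr0.
Qed.

Lemma mvt_line1 (f : V -> R) (y v : V) (h : R) : 0 < h ->
 (forall s, 0 <= s <= h -> derivable f (y + s *: v) v) ->
 exists2 c, 0 < c < h & f (y + h *: v) - f y = 'D_v f (y + c *: v) * h.
Proof.
move=> h0 Hd.
have [c hc E] := @mvt_line2 f (cst 0) y y v h h0
   (fun s hs => conj (Hd s hs) (derivable_cst (0:R) _ _)).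
exists c => //; move: E; rewrite derive_cst /= !subr0 //.
Qed.
End S2.

Section S3.
Variables (R : realType) (d : nat).
Local Notation V := 'cV[R]_d.

Lemma aux4 (A B C D : R) : A - B - (C - D) = A - C - (B - D).
Proof. ring. Qed.
Lemma aux3 (A B C : R) : A - B = (A - C) - (B - C).
Proof. ring. Qed.

Lemma clairaut (f : V -> R) (U : set V) (x a b : V) :
  open U -> U x ->
  (forall y, U y -> derivable f y a) -> (forall y, U y -> derivable f y b) ->
  (forall y, U y -> derivable (fun z => derive f z a) y b) ->
  (forall y, U y -> derivable (fun z => derive f z b) y a) ->
  {for x, continuous (fun z => derive (fun w => derive f w a) z b)} ->
  {for x, continuous (fun z => derive (fun w => derive f w b) z a)} ->
  derive (fun w => derive f w a) x b = derive (fun w => derive f w b) x a.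
Proof.
move=> HUo Ux dfa dfb dfab dfba cc1 cc2.
set D1 := fun z => derive (fun w => derive f w a) z b.
set D2 := fun z => derive (fun w => derive f w b) z a.
suff H : forall e : R, 0 < e -> `|D1 x - D2 x| < e.
  apply/eqP; rewrite -subr_eq0 -normr_eq0; apply/eqP.
  move: (normr_ge0 (D1 x - D2 x)); rewrite le_eqVlt => /orP[/eqP<-//|/H].
  by rewrite ltxx.
move=> e e0.
have e20 : 0 < e / 2 by rewrite divr_gt0.
have nU : nbhs x U by exact: HUo.
have n1 : \forall y \near x, `|D1 x - D1 y| < e / 2.
  by move: cc1 => /cvgrPdist_lt; apply.
have n2 : \forall y \near x, `|D2 x - D2 y| < e / 2.
  by move: cc2 => /cvgrPdist_lt; apply.
have : nbhs x (fun y => [/\ U y, `|D1 x - D1 y| < e / 2 & `|D2 x - D2 y| < e / 2]).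
  by apply: (filterS3 _ _ nU n1 n2) => y ? ? ?; split.
move=> /nbhs_ballP [r /= r0 Hr].
set K := `|a| + `|b| + 1.
have K0 : 0 < K by rewrite /K ltr_wpDl // addr_ge0.
set h := r / (2 * K).
have h0 : 0 < h by rewrite divr_gt0 // mulr_gt0.
have inball s t : 0 <= s <= h -> 0 <= t <= h ->
   [/\ U (x + s *: a + t *: b), `|D1 x - D1 (x + s *: a + t *: b)| < e / 2
     & `|D2 x - D2 (x + s *: a + t *: b)| < e / 2].
  move=> /andP[s0 sh] /andP[t0 th]; apply: Hr.
  rewrite -ball_normE /ball_ /=.
  have -> : x - (x + s *: a + t *: b) = - (s *: a + t *: b).
    by rewrite -addrA opprD addrA subrr sub0r.
  rewrite normrN (le_lt_trans (ler_normD _ _)) // !normrZ !ger0_norm //.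
  have hK : h * K = r / 2.
    by rewrite /h invfM mulrA -mulrA mulVf ?mulr1 // gt_eqF.
  have na := normr_ge0 a; have nb := normr_ge0 b.
  have : s * `|a| <= h * `|a| by rewrite ler_wpM2r.
  have : t * `|b| <= h * `|b| by rewrite ler_wpM2r.
  move: hK; rewrite /K; nra.
have hh : 0 <= h <= h by apply/andP; split; [exact: ltW | exact: lexx].
have h00 : (0:R) <= 0 <= h by apply/andP; split; [exact: lexx | exact: ltW].
have [c1 /andP[c10 c1h] E1] := @mvt_line2 R d f f (x + h *: b) x a h h0
  (fun s hs => conj (dfa _ (let: And3 u _ _ := inball s h hs hh in
                           eq_ind _ U u _ (addrAC _ _ _)))
                    (dfa _ (let: And3 u _ _ := inball s 0 hs h00 in
                           eq_ind _ U u _ (etrans (congr1 _ (scale0r _)) (addr0 _))))).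
have c1hh : 0 <= c1 <= h by rewrite !ltW.
have [c2 /andP[c20 c2h] E2] := @mvt_line1 R d (fun w => derive f w a) (x + c1 *: a) b h h0
  (fun s hs => dfab _ (let: And3 u _ _ := inball c1 s c1hh hs in u)).
have [c3 /andP[c30 c3h] E3] := @mvt_line2 R d f f (x + h *: a) x b h h0
  (fun s hs => conj (dfb _ (let: And3 u _ _ := inball h s hh hs in u))
                    (dfb _ (let: And3 u _ _ := inball 0 s h00 hs in
                           eq_ind _ U u _ (etrans (congr1 (fun z => z + _) (etrans (congr1 _ (scale0r _)) (addr0 _))) erefl)))).
have c3hh : 0 <= c3 <= h by rewrite !ltW.
have [c4 /andP[c40 c4h] E4] := @mvt_line1 R d (fun w => derive f w b) (x + c3 *: b) a h h0
  (fun s hs => dfba _ (let: And3 u _ _ := inball s c3 hs c3hh in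
                           eq_ind _ U u _ (addrAC _ _ _))).
have c2hh : 0 <= c2 <= h by rewrite !ltW.
have c4hh : 0 <= c4 <= h by rewrite !ltW.
rewrite (addrAC x (h *: b) (c1 *: a)) E2 in E1.
rewrite (addrAC x (h *: a) (c3 *: b)) E4 in E3.
have hn : h != 0 by rewrite gt_eqF.
have L := aux4 (f (x + h *: a + h *: b)) (f (x + h *: b)) (f (x + h *: a)) (f x).
rewrite (addrAC x (h *: b) (h *: a)) in E1.
have E : D1 (x + c1 *: a + c2 *: b) = D2 (x + c3 *: b + c4 *: a).
  by have := etrans (esym E1) (etrans (esym L) E3) => /(mulIf hn) /(mulIf hn).
have [_ I1 _] := inball c1 c2 c1hh c2hh.
have [_ _ I2] := inball c4 c3 c4hh c3hh.
rewrite (addrAC x (c4 *: a)) -E in I2.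
have -> : D1 x - D2 x = (D1 x - D1 (x + c1 *: a + c2 *: b)) - (D2 x - D1 (x + c1 *: a + c2 *: b)).
  exact: aux3.
set P1 := D1 (x + c1 *: a + c2 *: b) in I1 I2 *.
set X1 := D1 x in I1 *. set X2 := D2 x in I2 *.
have T : `|(X1 - P1) - (X2 - P1)| <= `|X1 - P1| + `|X2 - P1| := ler_normB _ _.
have T2 : `|X1 - P1| + `|X2 - P1| < e / 2 + e / 2 := ltrD I1 I2.
rewrite -splitr in T2.
exact: (le_lt_trans T T2).
Unshelve. all: by end_near.
Qed.

End S3.

Section S4.
Variables (R : realType) (d : nat).
Local Notation V := 'cV[R]_d.

Lemma is_derive_cMM (c : R) (f g : R -> R) (x df dg : R) :
  is_derive x 1 f df -> is_derive x 1 g dg ->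
  is_derive x 1 (fun s => c * f s * g s) (c * f x * dg + g x * (c * df)).
Proof.
move=> hf hg.
have hcf : is_derive x 1 (fun s => c * f s) (c * df) by have := is_deriveZ c hf.
exact: is_deriveM' hcf hg.
Qed.

Lemma is_derive_affine (c k x : R) : is_derive x 1 (fun s : R => c + s * k) k.
Proof.
have h1 : is_derive x 1 (fun s : R => s) 1 := is_derive_id x 1.
have h2 : is_derive x 1 (fun s : R => k) 0 := is_derive_cst k x 1.
have := is_deriveD' (is_derive_cst c x 1) (is_deriveM' h1 h2).
by rewrite mulr0 add0r mulr1 add0r.
Qed.

Lemma near_line (U : set V) (y v : V) : nbhs y U -> \forall s \near (0:R), U (y + s *: v).
Proof. by move=> /nbhs0P; apply: near0Z. Qed.

Variables (alpha : 'I_d -> 'I_d -> 'I_d -> R) (phi : V -> R) (U : set V).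
Hypotheses (HUo : open U) (HC2 : C2_on U phi)
  (Hpde : forall x, U x -> forall i : 'I_d,
     partial phi i x =
       \sum_(j < d) \sum_(k < d) alpha i j k * x j 0 * partial phi k x + x i 0 * phi x).

Lemma pde_deriv (y : V) (Uy : U y) (b a : 'I_d) :
  partial (partial phi b) a y =
   \sum_(j<d) \sum_(k<d) alpha b j k * (ebasis a j 0) * partial phi k y
   + \sum_(j<d) \sum_(k<d) alpha b j k * y j 0 * partial (partial phi k) a y
   + (ebasis a b 0) * phi y + y b 0 * partial phi a y.
Proof.
set v : V := ebasis a.
have Ly : forall s : R, y + s *: v = y + s *: v := fun s => erefl.
have y0 : y + 0 *: v = y by rewrite scale0r addr0.
have [_ dphi _ dP _] := HC2 Uy.
have dg : is_derive (0:R) 1 (fun s => partial phi b (y + s *: v)) (partial (partial phi b) a y).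
  have := @line_derive R d (partial phi b) y v 0; rewrite y0; apply; exact: dP.
have dQ : is_derive (0:R) 1 (fun s => phi (y + s *: v)) (partial phi a y).
  have := @line_derive R d phi y v 0; rewrite y0; apply; exact: dphi.
have dPk k : is_derive (0:R) 1 (fun s => partial phi k (y + s *: v)) (partial (partial phi k) a y).
  have := @line_derive R d (partial phi k) y v 0; rewrite y0; apply; exact: dP.
have ent s j : (y + s *: v) j 0 = y j 0 + s * v j 0 by rewrite !mxE.
set h := fun s : R => \sum_(j < d) \sum_(k < d) alpha b j k * (y j 0 + s * v j 0) * partial phi k (y + s *: v)
   + (y b 0 + s * v b 0) * phi (y + s *: v).
have nU : nbhs y U by exact: HUo.
have gh : \forall s \near (0:R), partial phi b (y + s *: v) = h s.
  apply: filterS (near_line v nU) => s Us.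
  rewrite Hpde // /h; congr (_ + _); last by rewrite ent.
  by apply: eq_bigr => j _; apply: eq_bigr => k _; rewrite ent.
have dh : is_derive (0:R) 1 h
   (\sum_(j < d) \sum_(k < d) (alpha b j k * (y j 0 + 0 * v j 0) * partial (partial phi k) a y
        + partial phi k (y + 0 *: v) * (alpha b j k * v j 0))
    + ((y b 0 + 0 * v b 0) * partial phi a y + phi (y + 0 *: v) * v b 0)).
  apply: is_deriveD'.
    apply: is_derive_sum' => j; apply: is_derive_sum' => k.
    exact: is_derive_cMM (is_derive_affine _ _ _) (dPk k).
  exact: is_deriveM' (is_derive_affine _ _ _) dQ.
have gh' : \forall s \near (0:R), h s = partial phi b (y + s *: v).
  by apply: filterS gh => s ->.
have dh' := near_eq_is_derive gh' dh.
rewrite (is_derive_uniq dg dh') y0 !mul0r !addr0.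
have E : \sum_(j < d) \sum_(k < d)
        (alpha b j k * (y j 0 + 0 * v j 0) * partial (partial phi k) a y +
         partial phi k y * (alpha b j k * v j 0)) =
    \sum_(j < d) \sum_(k < d) alpha b j k * y j 0 * partial (partial phi k) a y +
    \sum_(j < d) \sum_(k < d) alpha b j k * v j 0 * partial phi k y.
  rewrite -big_split; apply: eq_bigr => j _; rewrite -big_split; apply: eq_bigr => k _.
  by rewrite mul0r addr0 [_ * (_ * _)]mulrC.
rewrite E; ring.
Qed.
End S4.

Section S5.
Variables (R : realType) (d : nat).
Local Notation M := 'M[R]_d.

Lemma zaux (G : zmodType) (X S TM cI Y : G) : X = S + TM + cI + Y -> X - TM = S + cI + Y.
Proof. by move=> ->; rewrite (addrAC S TM) (addrAC _ TM) addrK. Qed.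

Lemma comm_alg_mx (T S X : M) (p y : 'cV[R]_d) (c : R) :
  T^T = T -> S^T = S -> X^T = X ->
  p = T *m p + c *: y -> X = S + T *m X + c *: 1%:M + y *m p^T ->
  c *: (T *m S) = c *: (S *m T).
Proof.
move=> sT sS sX hp hX.
have hy : (1%:M - T) *m p = c *: y.
  by rewrite mulmxBl mul1mx {1}hp addrAC subrr add0r.
have hM : (1%:M - T) *m X = S + c *: 1%:M + y *m p^T.
  by rewrite mulmxBl mul1mx; apply: zaux.
set N := c *: X - p *m p^T.
have hN : (1%:M - T) *m N = c *: S + (c * c) *: 1%:M.
  rewrite /N mulmxBr -scalemxAr hM mulmxA hy -scalemxAl.
  by rewrite !scalerDr scalerA addrK.
have sN : N^T = N by rewrite /N linearB /= linearZ /= sX trmx_mul trmxK.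
clearbody N.
have sI : (1%:M : M)^T = 1%:M by rewrite trmx1.
have hN2 : N *m (1%:M - T) = c *: S + (c * c) *: 1%:M.
  have := congr1 trmx hN; rewrite trmx_mul sN linearB /= sI sT => ->.
  by rewrite linearD /= !linearZ /= sS sI.
have TN : T *m N = N *m T.
  have := etrans hN (esym hN2).
  by rewrite mulmxBl mulmxBr mul1mx mulmx1 => /addrI /oppr_inj.
have e1 : c *: S = (1%:M - T) *m N - (c * c) *: 1%:M by rewrite hN addrK.
have e2 : c *: S = N *m (1%:M - T) - (c * c) *: 1%:M by rewrite hN2 addrK.
rewrite scalemxAr e1 scalemxAl e2.
rewrite (mulmxBr T) (mulmxBl _ _ T) -scalemxAr -scalemxAl mulmx1 mul1mx.
congr (_ - _).
rewrite (mulmxBl _ _ N) (mulmxBr N) mulmx1 mul1mx (mulmxBr T) (mulmxBl _ _ T).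
congr (_ - _); first exact: TN.
by rewrite TN mulmxA TN.
Qed.
End S5.

Section S6.
Variables (R : realType) (d : nat).
Local Notation V := 'cV[R]_d.
Variables (alpha : 'I_d -> 'I_d -> 'I_d -> R).
Hypothesis (Hsym : forall i j k, [/\ alpha i j k = alpha j i k, alpha i j k = alpha i k j,
                            alpha i j k = alpha k j i, alpha i j k = alpha j k i &
                            alpha i j k = alpha k i j]).

Definition Tm (v : V) : 'M[R]_d := \matrix_(b, k) \sum_(j < d) alpha b j k * v j 0.

Lemma Tm_sym v : (Tm v)^T = Tm v.
Proof.
apply/matrixP => b k; rewrite !mxE; apply: eq_bigr => j _.
by have [_ _ -> _ _] := Hsym k j b.
Qed.

Lemma TmD u w : Tm (u + w) = Tm u + Tm w.
Proof.
apply/matrixP => b k; rewrite !mxE -big_split; apply: eq_bigr => j _.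
by rewrite mxE mulrDr.
Qed.

Lemma TmZ c u : Tm (c *: u) = c *: Tm u.
Proof.
apply/matrixP => b k; rewrite !mxE mulr_sumr; apply: eq_bigr => j _.
by rewrite mxE mulrCA.
Qed.

Lemma Tm_mulE (v : V) m (P : 'M[R]_(d, m)) b c :
  (Tm v *m P) b c = \sum_(j < d) \sum_(k < d) alpha b j k * v j 0 * P k c.
Proof.
rewrite mxE exchange_big /=; apply: eq_bigr => k _.
by rewrite mxE mulr_suml.
Qed.

Variables (phi : V -> R) (U : set V).
Hypotheses (HUo : open U) (HC2 : C2_on U phi)
  (Hpde : forall x, U x -> forall i : 'I_d,
     partial phi i x =
       \sum_(j < d) \sum_(k < d) alpha i j k * x j 0 * partial phi k x + x i 0 * phi x).

Definition pcol (y : V) : V := \col_k partial phi k y.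
Definition Mh (y : V) : 'M[R]_d := \matrix_(b, a) partial (partial phi b) a y.

Lemma pcol_eq (y : V) : U y -> pcol y = Tm y *m pcol y + phi y *: y.
Proof.
move=> Uy.
apply/matrixP => b c; rewrite (ord1 c) [in RHS]mxE Tm_mulE !mxE Hpde //; congr (_ + _).
  by apply: eq_bigr => j _; apply: eq_bigr => k _; rewrite mxE.
by rewrite mulrC.
Qed.

Lemma pointwise_comm (y : V) : U y ->
  phi y *: (Tm y *m Tm (pcol y)) = phi y *: (Tm (pcol y) *m Tm y).
Proof.
move=> Uy.
apply: (@comm_alg_mx R d (Tm y) (Tm (pcol y)) (Mh y) (pcol y) y (phi y)).
- exact: Tm_sym.
- exact: Tm_sym.
- apply/matrixP => a b; rewrite !mxE.
  apply: (@clairaut R d phi U y (ebasis b) (ebasis a) HUo Uy).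
  + by move=> z Uz; have [_ H _ _ _] := HC2 Uz; exact: H.
  + by move=> z Uz; have [_ H _ _ _] := HC2 Uz; exact: H.
  + by move=> z Uz; have [_ _ _ H _] := HC2 Uz; exact: (H b a).
  + by move=> z Uz; have [_ _ _ H _] := HC2 Uz; exact: (H a b).
  + by have [_ _ _ _ H] := HC2 Uy; exact: (H b a).
  + by have [_ _ _ _ H] := HC2 Uy; exact: (H a b).
- apply/matrixP => b c; rewrite (ord1 c) [in RHS]mxE Tm_mulE !mxE Hpde //; congr (_ + _).
  by apply: eq_bigr => j _; apply: eq_bigr => k _; rewrite mxE.
  by rewrite mulrC.
- apply/matrixP => b a; rewrite !mxE (pde_deriv HUo HC2 Hpde Uy).
  congr (_ + _ + _ + _).
  + rewrite (bigD1 a) //= [X in _ + X]big1 ?addr0; last first.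
      move=> j ja; apply: big1 => k _.
      by rewrite /ebasis mxE (negbTE ja) /= mulr0 mul0r.
    apply: eq_bigr => k _; rewrite /ebasis !mxE eqxx /= mulr1.
    by have [_ -> _ _ _] := Hsym b a k.
  + have := Tm_mulE y (Mh y) b a; rewrite mxE => ->.
    by apply: eq_bigr => j _; apply: eq_bigr => k _; rewrite mxE.
  + by rewrite /ebasis mxE eqxx andbT mulrC.
  + by rewrite big_ord1 !mxE.
Qed.
End S6.

Section S7.
Variables (R : realType) (d : nat).
Local Notation V := 'cV[R]_d.

Lemma lin_expand (L : V -> R) :
  (forall u w, L (u + w) = L u + L w) -> (forall c u, L (c *: u) = c * L u) ->
  forall v, L v = \sum_(k < d) v k 0 * L (ebasis k).
Proof.
move=> LD LZ v.
have L0 : L 0 = 0 by rewrite -(scale0r 0) LZ mul0r.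
rewrite {1}(matrix_sum_delta v).
rewrite (big_morph L LD L0); apply: eq_bigr => k _.
by rewrite big_ord1 LZ.
Qed.

Lemma cont_lin (L : V -> R) (g : R -> V) (x0 : R) :
  (forall u w, L (u + w) = L u + L w) -> (forall c u, L (c *: u) = c * L u) ->
  (forall k, {for x0, continuous (fun s => g s k 0)}) ->
  {for x0, continuous (fun s => L (g s))}.
Proof.
move=> LD LZ gc.
have -> : (fun s => L (g s)) = \sum_(k < d) (fun s => g s k 0 * L (ebasis k)).
  by apply/funext => s; rewrite fct_sumE (lin_expand LD LZ).
apply: (big_ind (fun h : R -> R => {for x0, continuous h})).
- exact: cst_continuous.
- by move=> f1 f2 c1 c2; apply: continuousD.
- move=> k _; apply: (@continuousM R R (fun s => g s k 0) (cst (L (ebasis k)))) => //.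
  exact: cst_continuous.
Qed.
End S7.

Section S8.
Variables (R : realType) (d : nat).
Local Notation V := 'cV[R]_d.

Lemma scaleI_mx m n (c : R) (A B : 'M[R]_(m, n)) : c != 0 -> c *: A = c *: B -> A = B.
Proof.
by move=> c0 /(congr1 (fun M => c^-1 *: M)); rewrite !scalerA mulVf // !scale1r.
Qed.

Lemma cont_zero (f : R -> R) : {for 0, continuous f} ->
  (\forall s \near (0:R), s != 0 -> f s = 0) -> f 0 = 0.
Proof.
move=> fc fz; apply/eqP; apply/negPn/negP => f0.
have e0 : 0 < `|f 0| by rewrite normr_gt0.
have n1 : \forall s \near (0:R), `|f 0 - f s| < `|f 0|.
  by move: fc => /cvgrPdist_lt; apply.
have : nbhs (0:R) (fun s => s != 0 -> `|f 0| < `|f 0|).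
  by apply: filterS2 n1 fz => s h1 h2 s0; move: h1; rewrite h2 // subr0.
move=> /nbhs_ballP [r /= r0 Hr].
have : ball (0:R) r (r / 2).
  rewrite -ball_normE /ball_ /= sub0r normrN gtr0_norm ?divr_gt0 //.
  by rewrite ltr_pdivrMr // ltr_pMr // ltr1n.
have rn : r / 2 != 0 by rewrite gt_eqF // divr_gt0.
by move=> /Hr /(_ rn); rewrite ltxx.
Qed.

Definition cm (T A : 'M[R]_d) := T *m A - A *m T.

Lemma cmD T A B : cm T (A + B) = cm T A + cm T B.
Proof. by rewrite /cm mulmxDr mulmxDl opprD addrACA. Qed.

Lemma cmZ T c A : cm T (c *: A) = c *: cm T A.
Proof. by rewrite /cm -scalemxAr -scalemxAl scalerBr. Qed.

Lemma cm0 T : cm T 0 = 0.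
Proof. by rewrite /cm mulmx0 mul0mx subrr. Qed.

Lemma cmT T : cm T T = 0.
Proof. by rewrite /cm subrr. Qed.

Variables (alpha : 'I_d -> 'I_d -> 'I_d -> R).
Hypothesis (Hsym : forall i j k, [/\ alpha i j k = alpha j i k, alpha i j k = alpha i k j,
                            alpha i j k = alpha k j i, alpha i j k = alpha j k i &
                            alpha i j k = alpha k i j]).
Variables (phi : V -> R) (U : set V).
Hypotheses (HUo : open U) (HC2 : C2_on U phi)
  (Hpde : forall x, U x -> forall i : 'I_d,
     partial phi i x =
       \sum_(j < d) \sum_(k < d) alpha i j k * x j 0 * partial phi k x + x i 0 * phi x).

Local Notation Tm := (Tm alpha).
Local Notation pcol := (pcol phi).

Lemma comm_small (x : V) (s : R) : s != 0 -> U (s *: x) -> phi (s *: x) != 0 ->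
  cm (Tm x) (Tm (Tm x *m (Tm x *m pcol (s *: x)))) +
  phi (s *: x) *: cm (Tm x) (Tm (Tm x *m x)) = 0.
Proof.
move=> s0 Uy f0.
set T := Tm x; set p := pcol (s *: x); set f := phi (s *: x).
have hc := pointwise_comm Hsym HUo HC2 Hpde Uy.
have hc1 := scaleI_mx f0 hc.
rewrite TmZ -/T -/p -scalemxAl -scalemxAr in hc1.
have hc2 : cm T (Tm p) = 0 by rewrite /cm (scaleI_mx s0 hc1) subrr.
have hp : p = s *: (T *m p + f *: x).
  rewrite {1}/p (pcol_eq Hpde Uy) -/p -/f TmZ -/T -scalemxAl scalerDr.
  by rewrite !scalerA mulrC.
have hc3 : cm T (Tm (T *m p)) = 0.
  move: hc2; rewrite {1}hp TmZ TmD TmZ cmZ cmD cmZ -/T cmT scaler0 addr0.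
  by move/eqP; rewrite scaler_eq0 (negbTE s0) /= => /eqP.
move: hc3; rewrite {1}hp -scalemxAr mulmxDr -scalemxAr TmZ TmD TmZ cmZ cmD cmZ.
by move/eqP; rewrite scaler_eq0 (negbTE s0) /= => /eqP.
Qed.

Lemma Pzero (HU0 : U 0) (Hphi0 : phi 0 != 0) (x : V) : cm (Tm x) (Tm (Tm x *m x)) = 0.
Proof.
apply/matrixP => a b; rewrite [RHS]mxE.
set Q := cm (Tm x) (Tm (Tm x *m x)) a b.
pose Lf (v : V) := cm (Tm x) (Tm (Tm x *m (Tm x *m v))) a b.
have LD u w : Lf (u + w) = Lf u + Lf w by rewrite /Lf !mulmxDr TmD cmD mxE.
have LZ c u : Lf (c *: u) = c * Lf u by rewrite /Lf -!scalemxAr TmZ cmZ mxE.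
pose f s := phi (s *: x) * Q + Lf (pcol (s *: x)).
have fc : {for 0, continuous f}.
  have [c1 _ c2 _ _] := HC2 HU0.
  apply: continuousD.
  - apply: (@continuousM R R (fun s => phi (s *: x)) (cst Q)); last exact: cst_continuous.
    apply: (continuous_comp (f := fun s : R => s *: x)); first exact: scalel_continuous.
    by rewrite /= scale0r.
  - apply: (cont_lin LD LZ) => k.
    have -> : (fun s => pcol (s *: x) k 0) = fun s => partial phi k (s *: x).
      by apply/funext => s; rewrite mxE.
    apply: (continuous_comp (f := fun s : R => s *: x)); first exact: scalel_continuous.
    by rewrite /= scale0r; exact: c2.
have fz : \forall s \near (0:R), s != 0 -> f s = 0.
  have nU : nbhs (0:V) U by exact: HUo.
  have n1 : \forall s \near (0:R), U (s *: x) := near0Z x nU.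
  have [c1 _ _ _ _] := HC2 HU0.
  have p0 : 0 < `|phi 0| by rewrite normr_gt0.
  have n0 : \forall y \near (0:V), phi y != 0.
    have : \forall y \near (0:V), `|phi 0 - phi y| < `|phi 0|.
      by move: c1 => /cvgrPdist_lt; apply.
    apply: filterS => y hy; apply/negP => /eqP py.
    by move: hy; rewrite py subr0 ltxx.
  have n2 : \forall s \near (0:R), phi (s *: x) != 0 := near0Z x n0.
  apply: filterS2 n1 n2 => s Us ps s0.
  have := comm_small s0 Us ps.
  move/matrixP => /(_ a b); rewrite mxE [X in _ + X = _]mxE [RHS]mxE -/Q => E.
  by rewrite /f addrC.
have f0 : f 0 = phi 0 * Q.
  have T0 : Tm 0 = 0 by rewrite -(scale0r (0:V)) TmZ scale0r.
  have P0 : pcol 0 = 0 by rewrite (pcol_eq Hpde HU0) T0 mul0mx scaler0 addr0.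
  have L0 : Lf 0 = 0 by rewrite -(scale0r (0:V)) LZ mul0r.
  by rewrite /f scale0r P0 L0 addr0.
have := cont_zero fc fz; rewrite f0 => /eqP; rewrite mulf_eq0 (negbTE Hphi0) /= => /eqP.
by [].
Qed.
End S8.

Section S9.
Variables (R : realType) (d : nat).
Local Notation V := 'cV[R]_d.
Variables (alpha : 'I_d -> 'I_d -> 'I_d -> R).
Hypothesis (Hsym : forall i j k, [/\ alpha i j k = alpha j i k, alpha i j k = alpha i k j,
                            alpha i j k = alpha k j i, alpha i j k = alpha j k i &
                            alpha i j k = alpha k i j]).
Local Notation Tm := (Tm alpha).

Lemma La (u : V) a : u^T *m Amat alpha a = 'e_a *m Tm u.
Proof.
apply/matrixP => z s; rewrite (ord1 z) -rowE !mxE; apply: eq_bigr => r _.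
by rewrite !mxE mulrC.
Qed.

Lemma Lb (g : V) b : Amat alpha b *m g = Tm g *m delta_mx b 0.
Proof.
apply/matrixP => r z; rewrite (ord1 z) -colE !mxE; apply: eq_bigr => s _.
by rewrite !mxE; have [_ _ _ -> _] := Hsym b r s.
Qed.

Lemma Amat_sym a : (Amat alpha a)^T = Amat alpha a.
Proof.
by apply/matrixP => r s; rewrite !mxE; have [_ -> _ _ _] := Hsym a s r.
Qed.

Lemma ent_sandwich (M : 'M[R]_d) a b (z1 z2 z3 z4 : 'I_1) :
  (delta_mx z1 a *m M *m delta_mx b z2) z3 z4 = M a b.
Proof.
by rewrite (ord1 z1) (ord1 z2) (ord1 z3) (ord1 z4) -rowE -colE !mxE.
Qed.

Lemma ent_sandwich2 (M1 M2 : 'M[R]_d) a b (z1 z2 z3 z4 : 'I_1) :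
  (delta_mx z1 a *m M1 *m M2 *m delta_mx b z2) z3 z4 = (M1 *m M2) a b.
Proof. by rewrite -(mulmxA _ M1 M2) ent_sandwich. Qed.

Lemma S_ident (u : V) a b :
  \sum_(i < d) (Cmat alpha a b *m u) i 0 * (Tm u *m u) i 0 =
  - cm (Tm u) (Tm (Tm u *m u)) a b.
Proof.
set g := Tm u *m u.
have -> : \sum_(i < d) (Cmat alpha a b *m u) i 0 * g i 0 = ((Cmat alpha a b *m u)^T *m g) 0 0.
  by rewrite [RHS]mxE; apply: eq_bigr => i _; rewrite [_^T 0 i]mxE.
rewrite trmx_mul /Cmat linearB /= !trmx_mul !Amat_sym.
rewrite mulmxBr mulmxBl !mulmxA La La -!mulmxA Lb Lb !mulmxA.
rewrite [LHS]mxE [X in _ + X = _]mxE !ent_sandwich2 /cm [X in _ = - X]mxE [X in _ = - (_ + X)]mxE -/g.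
have -> : (Tm u *m Tm g) b a = (Tm g *m Tm u) a b.
  by rewrite -[in RHS](Tm_sym Hsym g) -[in RHS](Tm_sym Hsym u) -trmx_mul [RHS]mxE.
by rewrite opprD opprK addrC.
Qed.
End S9.

Section S10.
Variables (R : realType) (d : nat).
Local Notation V := 'cV[R]_d.

Lemma entry_derive (t : R -> V) (s : R) (D : V) k :
  is_derive s 1 t D -> is_derive s 1 (fun x => t x k 0) (D k 0).
Proof.
move=> [dt <-].
have := derive_mx dt => /matrixP /(_ k 0); rewrite mxE => E.
apply: DeriveDef; first exact: ((derivable_mxP t s 1).1 dt k 0).
by rewrite E.
Qed.

Lemma is_derive_cMMM (c : R) (f g h : R -> R) (x df dg dh : R) :
  is_derive x 1 f df -> is_derive x 1 g dg -> is_derive x 1 h dh ->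
  is_derive x 1 (fun s => c * f s * g s * h s)
     (c * (df * g x * h x + f x * dg * h x + f x * g x * dh)).
Proof.
move=> hf hg hh.
have h1 := is_derive_cMM c hf hg.
have h2 := is_deriveM' h1 hh.
apply: is_derive_eq h2 _ => /=.
ring.
Qed.

Variables (alpha : 'I_d -> 'I_d -> 'I_d -> R).
Hypothesis (Hsym : forall i j k, [/\ alpha i j k = alpha j i k, alpha i j k = alpha i k j,
                            alpha i j k = alpha k j i, alpha i j k = alpha j k i &
                            alpha i j k = alpha k i j]).

Lemma Tmu_ent (u : V) a : (Tm alpha u *m u) a 0 = \sum_(b < d) \sum_(c < d) alpha a b c * u b 0 * u c 0.
Proof.
rewrite mxE exchange_big /=; apply: eq_bigr => c _.
by rewrite mxE mulr_suml.
Qed.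

Lemma deriv_alg (u w : V) :
  \sum_(a < d) \sum_(b < d) \sum_(c < d)
     alpha a b c * (w a 0 * u b 0 * u c 0 + u a 0 * w b 0 * u c 0 + u a 0 * u b 0 * w c 0)
  = 3%:R * \sum_(a < d) w a 0 * (Tm alpha u *m u) a 0.
Proof.
set S := \sum_(a < d) w a 0 * (Tm alpha u *m u) a 0.
have T1 : \sum_(a < d) \sum_(b < d) \sum_(c < d) alpha a b c * (w a 0 * u b 0 * u c 0) = S.
  apply: eq_bigr => a _; rewrite Tmu_ent mulr_sumr; apply: eq_bigr => b _.
  rewrite mulr_sumr; apply: eq_bigr => c _; ring.
have T2 : \sum_(a < d) \sum_(b < d) \sum_(c < d) alpha a b c * (u a 0 * w b 0 * u c 0) = S.
  rewrite exchange_big /=; apply: eq_bigr => b _; rewrite Tmu_ent mulr_sumr; apply: eq_bigr => a _.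
  rewrite mulr_sumr; apply: eq_bigr => c _.
  have [-> _ _ _ _] := Hsym a b c; ring.
have T3 : \sum_(a < d) \sum_(b < d) \sum_(c < d) alpha a b c * (u a 0 * u b 0 * w c 0) = S.
  rewrite (eq_bigr (fun a => \sum_(c < d) \sum_(b < d) alpha a b c * (u a 0 * u b 0 * w c 0))); last first.
    by move=> a _; rewrite exchange_big.
  rewrite exchange_big /=; apply: eq_bigr => c _; rewrite Tmu_ent mulr_sumr; apply: eq_bigr => a _.
  rewrite mulr_sumr; apply: eq_bigr => b _.
  have [_ _ _ _ ->] := Hsym a b c; ring.
have E : \sum_(a < d) \sum_(b < d) \sum_(c < d)
     alpha a b c * (w a 0 * u b 0 * u c 0 + u a 0 * w b 0 * u c 0 + u a 0 * u b 0 * w c 0)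
  = S + S + S.
  rewrite -[X in _ = X + _ + _]T1 -[X in _ = _ + X + _]T2 -[X in _ = _ + X]T3.
  rewrite -!big_split; apply: eq_bigr => a _.
  rewrite -!big_split; apply: eq_bigr => b _; rewrite -!big_split; apply: eq_bigr => c _.
  by rewrite !mulrDr.
rewrite E; ring.
Qed.
End S10.

Lemma my_cst (R : realType) (f : R -> R) (x y : R) :
  (forall z : R, is_derive z (1:R) f 0) -> f x = f y.
Proof.
move=> Hd.
wlog xLy : x y / x <= y by move=> H; case: (leP x y) => [/H |/ltW /H].
rewrite -(subKr (f y) (f x)).
have [| _ _] := MVT_segment xLy (fun z _ => Hd z); last by rewrite mul0r => ->; rewrite subr0.
apply/continuous_subspaceT=> r.
exact/differentiable_continuous/derivable1_diffP/(@ex_derive _ _ _ _ _ _ _ (Hd r)).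
Qed.

Unset Implicit Arguments.

Theorem mainTheorem9 (R : realType) (d : nat) (alpha : 'I_d -> 'I_d -> 'I_d -> R)
  (Hsym : forall i j k, [/\ alpha i j k = alpha j i k, alpha i j k = alpha i k j,
                            alpha i j k = alpha k j i, alpha i j k = alpha j k i &
                            alpha i j k = alpha k i j])
  (phi : 'cV[R]_d -> R) (U : set 'cV[R]_d)
  (HUo : open U) (HU0 : U 0)
  (HC2 : C2_on U phi)
  (Hpde : forall x, U x -> forall i : 'I_d,
     partial phi i x =
       \sum_(j < d) \sum_(k < d) alpha i j k * x j 0 * partial phi k x + x i 0 * phi x)
  (Hphi0 : phi 0 != 0) :
  forall (i j : 'I_d) (xi : 'cV[R]_d) (t : R -> 'cV[R]_d),
    t 0 = xi ->
    (forall s : R, is_derive s 1 t (Cmat alpha i j *m t s)) ->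
    forall s : R, Fcubic alpha (t s) = Fcubic alpha xi.
Proof.
move=> i j xi t t0 dt s.
have Hd : forall s' : R, is_derive s' 1 (fun s => Fcubic alpha (t s)) 0.
  move=> s'.
  pose w := Cmat alpha i j *m t s'.
  have du k : is_derive s' 1 (fun x => t x k 0) (w k 0) := entry_derive k (dt s').
  have D : is_derive s' 1 (fun s => Fcubic alpha (t s))
    (\sum_(a < d) \sum_(b < d) \sum_(c < d) alpha a b c *
       (w a 0 * t s' b 0 * t s' c 0 + t s' a 0 * w b 0 * t s' c 0 + t s' a 0 * t s' b 0 * w c 0)).
    rewrite /Fcubic.
    apply: is_derive_sum' => a.
    apply: is_derive_sum' => b.
    apply: is_derive_sum' => c.
    exact: is_derive_cMMM (du a) (du b) (du c).
  apply: is_derive_eq D _.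
  rewrite (deriv_alg Hsym (t s') w) /w S_ident // (Pzero Hsym HUo HC2 Hpde HU0 Hphi0).
  by rewrite mxE oppr0 mulr0.
by have := my_cst s 0 Hd; rewrite /= t0.
Qed.
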